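(* Let $G=(V,E)$ be a finite simple graph with $|V(G)|=n$ and let $k$ be a positive integer. Then $\gamma_{gr}^{Z,k}(G)\geq n-F_k(G)$.
   Context: For a vertex $v$, $N(v)$ is its open neighborhood and $N[v]=N(v)\cup\{v\}$. A sequence $S=(v_1,\ldots,v_m)$ of distinct vertices is a $k$-$Z$-sequence if for each $i\in[m]$ there is a vertex $u_i\in N(v_i)$ such that the number of indices $j<i$ with $u_i\in N[v_j]$ is less than $k$; $\gamma_{gr}^{Z,k}(G)$ is the maximum length of a $k$-$Z$-sequence. $k$-forcing: initially a set $B$ of vertices is colored blue and the rest white; at each step, if a blue vertex has at most $k$ white neighbors (and at least one), all its white neighbors are colored blue. $B$ is a $k$-forcing set if repeated application eventually colors all vertices blue. $F_k(G)$ is the minimum size of a $k$-forcing set of $G$. *)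

(* Defs.v *)
(* A finite simple graph: vertex type T : finType,
   adjacency e : rel T, assumed symmetric and irreflexive in the theorem. *)
From mathcomp Require Import all_boot.
Set Implicit Arguments.
Unset Strict Implicit.
Unset Printing Implicit Defensive.

Section Graph.
Variables (T : finType) (e : rel T).

Definition onbhd (v : T) : {set T} := [set u | e v u].
Definition cnbhd (v : T) : {set T} := v |: onbhd v.

Definition kZseq (k : nat) (s : seq T) : bool :=
  uniq s &&
  [forall i : 'I_(size s),
     [exists u, (u \in onbhd (tnth (in_tuple s) i)) &&
        (count (fun w => u \in cnbhd w) (take i s) < k)]].

(* gamma_gr^{Z,k}(G): maximum length of a k-Z-sequence (lengths are
   bounded by #|T| since the vertices are distinct). *)
Definition gammaZk (k : nat) : nat :=
  \max_(m < #|T|.+1 | [exists s : m.-tuple T, kZseq k s]) m.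

Definition kforce_step (k : nat) (B : {set T}) : {set T} :=
  B :|: \bigcup_(v in B | #|onbhd v :\: B| <= k) onbhd v.

Definition kforcing (k : nat) (B : {set T}) : bool :=
  iter #|T| (kforce_step k) B == setT.

Lemma kforcing_exists (k : nat) :
  exists n, [exists B : {set T}, kforcing k B && (#|B| == n)].
Proof.
exists #|T|; apply/existsP; exists setT; rewrite cardsT eqxx andbT.
rewrite /kforcing; elim: #|T| => //= n /eqP ->.
by apply/eqP/setP=> x; rewrite !inE.
Qed.

Definition Fk (k : nat) : nat := ex_minn (kforcing_exists k).

End Graph.

(* Main.v *)
Require Import Defs.
From mathcomp Require Import all_boot.

Section Aux.
Variables (T : finType) (e : rel T) (k : nat).
Hypothesis esym : symmetric e.

Definition Zprop (s : seq T) := forall x0 i, i < size s ->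
  exists u, e (nth x0 s i) u /\ count (fun w => u \in cnbhd e w) (take i s) < k.

Lemma kZ_of (s : seq T) : uniq s -> Zprop s -> kZseq e k s.
Proof.
move=> Hu HZ; rewrite /kZseq Hu /=; apply/forallP => i.
have [u [Hu1 Hu2]] := HZ (tnth (in_tuple s) i) i (ltn_ord i).
apply/existsP; exists u; rewrite /onbhd inE Hu2 andbT.
by rewrite (tnth_nth (tnth (in_tuple s) i)).
Qed.

Lemma step_sub (B : {set T}) : B \subset kforce_step e k B.
Proof. exact: subsetUl. Qed.

Lemma iter_sub n (B : {set T}) : B \subset iter n (kforce_step e k) B.
Proof.
elim: n => //= n IH; apply: subset_trans IH _; exact: step_sub.
Qed.

Lemma main_ind n (B : {set T}) : exists s, [/\ uniq s,
  (forall w, (w \in s) = (w \in iter n (kforce_step e k) B) && (w \notin B)) &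
  Zprop s].
Proof.
elim: n B => [|n IH] B.
  exists [::]; split => //; first by move=> w /=; rewrite andbN.
set B' := kforce_step e k B.
have [s' [Hu' Hm' HZ']] := IH B'.
have sBB' : B \subset B' := step_sub B.
have sB'I : B' \subset iter n (kforce_step e k) B' := iter_sub n B'.
set t := enum (B' :\: B).
have Htm : forall w, (w \in t) = (w \in B') && (w \notin B).
  by move=> w; rewrite mem_enum !inE andbC.
have Hut : uniq t := enum_uniq _.
have Hdisj : forall w, w \in t -> w \notin s'.
  by move=> w; rewrite Htm Hm' => /andP [-> _]; rewrite andbF.
have Hus : uniq (s' ++ t).
  rewrite cat_uniq Hu' Hut andbT /=; apply/hasPn => w /Hdisj; done.
have Hms : forall w, (w \in s' ++ t) = (w \in iter n.+1 (kforce_step e k) B) && (w \notin B).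
  move=> w; rewrite mem_cat Hm' Htm iterSr -/B'.
  case: (boolP (w \in B')) => wB' /=.
    by rewrite (subsetP sB'I _ wB') /=; case: (w \in B) .
  rewrite orbF; case: (boolP (w \in B)) => wB; last by rewrite !andbT.
  by rewrite (subsetP sBB' _ wB) in wB'.
exists (s' ++ t); split => //.
move=> x0 i; rewrite size_cat => Hi.
case: (ltnP i (size s')) => Hi'.
  have [u [H1 H2]] := HZ' x0 i Hi'.
  by exists u; rewrite nth_cat take_cat Hi'.
set j := i - size s'.
have Hj : j < size t by rewrite /j ltn_subLR.
rewrite nth_cat take_cat ltnNge Hi' /= -/j.
set v := nth x0 t j.
have vt : v \in t by apply: mem_nth.
have := vt; rewrite Htm => /andP [vB' vB].
move: vB'; rewrite /B' /kforce_step inE (negPf vB) /= => /bigcupP [x /andP [xB xk]].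
rewrite /onbhd inE => exv.
exists x; split; first by rewrite esym.
set r := s' ++ take j t.
have Hsr : s' ++ t = r ++ v :: drop j.+1 t.
  by rewrite /r -catA -drop_nth // cat_take_drop.
have Hur : uniq r by move: Hus; rewrite Hsr cat_uniq => /andP [].
have vr : v \notin r.
  by move: Hus; rewrite Hsr cat_uniq /= => /and3P [_ /norP [] ].
have Hrs : forall w, w \in r -> w \in s' ++ t.
  by move=> w wr; rewrite Hsr mem_cat wr.
rewrite -size_filter.
apply: (leq_ltn_trans (n := #|(onbhd e x :\: B) :\ v|)).
  rewrite cardE; apply: uniq_leq_size; first exact: filter_uniq.
  move=> w; rewrite mem_filter => /andP [xw wr].
  have := Hrs w wr; rewrite Hms => /andP [_ wB].
  rewrite mem_enum !inE wB /=.
  apply/andP; split; first by apply: contraNneq vr => <-.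
  move: xw; rewrite /cnbhd /onbhd !inE => /orP [/eqP xw|]; last by rewrite esym.
  by rewrite -xw xB in wB.
have vin : v \in onbhd e x :\: B by rewrite !inE vB exv.
rewrite (cardsD1 v (onbhd e x :\: B)) vin in xk.
by [].
Qed.

End Aux.

Theorem mainTheorem4 (T : finType) (e : rel T) (k : nat) :
  symmetric e -> irreflexive e -> 0 < k ->
  #|T| - Fk e k <= gammaZk e k.
Proof.
move=> esym _ _.
rewrite /Fk; case: ex_minnP => m /existsP [B /andP [HB /eqP Hm]] _.
have [s [Hu Hms HZ]] := main_ind T e k esym #|T| B.
move: HB; rewrite /kforcing => /eqP HB.
have Hsz : size s = #|T| - m.
  rewrite -Hm -(card_uniqP Hu) -(cardsC B) addKn.
  apply: eq_card => w; rewrite Hms HB !inE //.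
have Hle : size s < #|T|.+1 by rewrite ltnS Hsz leq_subr.
rewrite -Hsz /gammaZk.
apply: (@leq_bigmax_cond _ _ _ (Ordinal Hle)).
apply/existsP; exists (in_tuple s) => /=.
exact: kZ_of.
Qed.
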